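(* Let $d_*\ge1$ and $\Delta\in\mathbb N$, $\Delta\ge1$. Let $\approx_\Delta$ be the equivalence relation on $\mathbb Z^{d_*}$ generated by the relation: $a\sim b$ iff $|a|=|b|$ and $[a-b]\le\Delta$, and let $$d_\Delta=\sup\{[a-b]:\ a,b\in\mathbb Z^{d_*},\ a\approx_\Delta b\}.$$ Then $$d_\Delta\le C\,\Delta^{\frac{(d_*+1)!}{2}},$$ where $C$ depends only on $d_*$.
   Context: For $a\in\mathbb Z^{d_*}$, $|a|$ denotes the Euclidean norm, and $[a-b]=\min(|a-b|,|a+b|)$ for $a,b\in\mathbb Z^{d_*}$. ''Generated by'' means the smallest equivalence relation containing $\sim$ (i.e. $a\approx_\Delta b$ iff there is a finite chain $a=c_0\sim c_1\sim\dots\sim c_k=b$). *)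

(* Defs.v *)
From HB Require Import structures.
From mathcomp Require Import all_boot all_order all_algebra.
From Stdlib Require Import Relations.
Set Implicit Arguments. Unset Strict Implicit. Unset Printing Implicit Defensive.
Import Order.TTheory GRing.Theory Num.Theory.
Local Open Scope ring_scope.

Definition enorm (R : rcfType) (d : nat) (a : 'rV[int]_d) : R :=
  Num.sqrt (\sum_(i < d) ((a 0 i)%:~R) ^+ 2).

Definition bracket (R : rcfType) (d : nat) (a b : 'rV[int]_d) : R :=
  Num.min (enorm R (a - b)) (enorm R (a + b)).

Definition simD (R : rcfType) (d Delta : nat) (a b : 'rV[int]_d) : Prop :=
  enorm R a = enorm R b /\ bracket R a b <= Delta%:R.

Definition approxD (R : rcfType) (d Delta : nat) : relation 'rV[int]_d :=
  clos_refl_sym_trans _ (@simD R d Delta).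

(* Main.v *)
Require Import Defs.
From HB Require Import structures.
From mathcomp Require Import all_boot all_order all_algebra.
From Stdlib Require Import Relations.
From mathcomp Require Import ring lra perm zify.
Import Order.TTheory GRing.Theory Num.Theory.
Local Open Scope ring_scope.
Set Implicit Arguments. Unset Strict Implicit. Unset Printing Implicit Defensive.


Section Vec.
Variable R : rcfType.
Variable d : nat.
Implicit Types x y z : 'rV[R]_d.

Definition dot x y : R := \sum_(i < d) x 0 i * y 0 i.
Definition sqn x := dot x x.

Lemma dotC x y : dot x y = dot y x.
Proof. by apply: eq_bigr => i _; rewrite mulrC. Qed.
Lemma dotDl x y z : dot (x + y) z = dot x z + dot y z.
Proof. by rewrite /dot -big_split; apply: eq_bigr => i _; rewrite mxE mulrDl. Qed.
Lemma dotNl x y : dot (- x) y = - dot x y.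
Proof. by rewrite /dot -sumrN; apply: eq_bigr => i _; rewrite mxE mulNr. Qed.
Lemma dotBl x y z : dot (x - y) z = dot x z - dot y z.
Proof. by rewrite dotDl dotNl. Qed.
Lemma dotDr x y z : dot z (x + y) = dot z x + dot z y.
Proof. by rewrite !(dotC z) dotDl. Qed.
Lemma dotBr x y z : dot z (x - y) = dot z x - dot z y.
Proof. by rewrite !(dotC z) dotBl. Qed.
Lemma dotZl (a : R) x y : dot (a *: x) y = a * dot x y.
Proof. by rewrite /dot mulr_sumr; apply: eq_bigr => i _; rewrite mxE mulrA. Qed.
Lemma dotZr (a : R) x y : dot y (a *: x) = a * dot y x.
Proof. by rewrite !(dotC y) dotZl. Qed.
Lemma dot0l x : dot 0 x = 0.
Proof. by rewrite /dot big1 // => i _; rewrite mxE mul0r. Qed.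
Lemma sqn_ge0 x : 0 <= sqn x.
Proof. by apply: sumr_ge0 => i _; rewrite -expr2 sqr_ge0. Qed.
Lemma sqn_eq0 x : sqn x = 0 -> x = 0.
Proof.
move=> h; apply/rowP => i; rewrite mxE.
have hge : forall j : 'I_d, xpredT j -> 0 <= x 0 j * x 0 j.
  by move=> j _; rewrite -expr2 sqr_ge0.
have := @psumr_eq0P R _ xpredT (fun i => x 0 i * x 0 i) hge h i isT.
by move=> /eqP; rewrite mulf_eq0 orbb => /eqP.
Qed.
Lemma sqnD x y : sqn (x + y) = sqn x + 2 * dot x y + sqn y.
Proof. rewrite /sqn dotDl !dotDr (dotC y x); ring. Qed.
Lemma sqnB x y : sqn (x - y) = sqn x - 2 * dot x y + sqn y.
Proof. rewrite /sqn dotBl !dotBr (dotC y x); ring. Qed.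
Lemma sqnN x : sqn (- x) = sqn x.
Proof. by rewrite /sqn dotNl dotC dotNl opprK. Qed.

Lemma CS x y : dot x y ^+ 2 <= sqn x * sqn y.
Proof.
have [y0|ny0] := eqVneq (sqn y) 0.
  by rewrite (sqn_eq0 y0) (dotC x) dot0l expr0n /= mulr_ge0 ?sqn_ge0.
have yp : 0 < sqn y by rewrite lt_def ny0 sqn_ge0.
have := sqn_ge0 (x - (dot x y / sqn y) *: y).
rewrite sqnB dotZr /sqn dotZl dotZr -/(sqn y) => h.
have : 0 <= sqn x * sqn y - dot x y ^+ 2.
  have -> : sqn x * sqn y - dot x y ^+ 2 =
    sqn y * (sqn x - 2 * (dot x y / sqn y * dot x y) +
      dot x y / sqn y * (dot x y / sqn y * sqn y)).
    by field; rewrite ny0.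
  by rewrite mulr_ge0 // ltW.
by rewrite subr_ge0.
Qed.

Lemma dot_mx x y : (x *m y^T) 0 0 = dot x y.
Proof. by rewrite mxE; apply: eq_bigr => i _; rewrite mxE. Qed.

End Vec.


Section Step.
Variable R : rcfType.
Variable d : nat.

Lemma gram_unit r (W : 'M[R]_(r, d)) : row_free W -> W *m W^T \in unitmx.
Proof.
move=> fW; rewrite -row_free_unit; apply: inj_row_free => v hv.
have h0 : sqn (v *m W) = 0.
  by rewrite /sqn -dot_mx trmx_mul mulmxA -(mulmxA v) hv !mul0mx mxE.
apply: (row_free_inj fW); rewrite /= mul0mx; exact: sqn_eq0 h0.
Qed.

Lemma step_bound r (W : 'M[R]_(r, d)) (b0 u : 'rV[R]_d) (y : 'rV[R]_r) :
  row_free W -> u = y *m W -> sqn (b0 + u) = sqn b0 ->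
  sqn u <= 4 * ((b0 *m W^T) *m (invmx (W *m W^T))^T *m (b0 *m W^T)^T) 0 0.
Proof.
move=> fW -> hs.
set G := W *m W^T; set c := b0 *m W^T.
have Gu : G \in unitmx by exact: gram_unit.
set z := c *m invmx G; set q := z *m W.
have e1 : dot q (y *m W) = dot b0 (y *m W).
  rewrite -!dot_mx /q /z trmx_mul !mulmxA -(mulmxA _ W) -/G -(mulmxA c) mulVmx //.
  by rewrite mulmx1 /c.
have e2 : sqn q = (c *m (invmx G)^T *m c^T) 0 0.
  rewrite /sqn -dot_mx /q trmx_mul !mulmxA -(mulmxA z) -/G /z -(mulmxA c) mulVmx //.
  by rewrite mulmx1 trmx_mul mulmxA.
rewrite -e2; move: hs; rewrite sqnD => hs.
have := sqn_ge0 (y *m W + 2 *: q).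
rewrite sqnD dotZr /sqn dotZl dotZr -/(sqn q) dotC e1.
set U := sqn (y *m W) in hs *; set D := dot b0 _ in hs *.
rewrite -/(sqn (y *m W)) -/U => h.
nra.
Qed.
Lemma r1_val (W b0 : 'rV[R]_d) : W != 0 ->
  ((b0 *m W^T) *m (invmx (W *m W^T))^T *m (b0 *m W^T)^T) 0 0 = dot b0 W ^+ 2 / sqn W.
Proof.
move=> W0.
have fW : row_free W by rewrite /row_free rank_rV W0.
have Gu := gram_unit fW.
have e : forall (A : 'M[R]_(1,1)) (B : 'M[R]_1), (A *m B) 0 0 = A 0 0 * B 0 0.
  by move=> A B; rewrite mxE big_ord1.
have hG : (W *m W^T) 0 0 = sqn W by rewrite dot_mx.
have sW : sqn W != 0 by apply/eqP => /sqn_eq0 h; move: W0; rewrite h eqxx.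
have hi : invmx (W *m W^T) 0 0 = (sqn W)^-1.
  have := mulVmx Gu; move/(congr1 (fun M : 'M[R]_1 => M 0 0)).
  rewrite e hG mxE /= => h; apply: (mulIf sW); rewrite h mulVf //.
rewrite !e [(invmx _)^T 0 0]mxE hi [(b0 *m W^T)^T 0 0]mxE dot_mx.
by rewrite expr2 mulrAC.
Qed.
End Step.


Section Bounds.
Variable R : rcfType.

Lemma det_bound n (M : 'M[R]_n) (B : R) :
  (forall i j, `|M i j| <= B) -> `|\det M| <= #|{perm 'I_n}|%:R * B ^+ n.
Proof.
move=> hB; rewrite /determinant.
apply: le_trans (ler_norm_sum _ _ _) _.
rewrite -sum1_card natr_sum mulr_suml; apply: ler_sum => s _.
rewrite mul1r normrM normrX normrN1 expr1n mul1r normr_prod.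
rewrite -[X in B ^+ X](card_ord n) -prodr_const; apply: ler_prod => i _.
by rewrite normr_ge0 hB.
Qed.

Lemma quad_bound r (c : 'rV[R]_r) (M : 'M[R]_r) (B E : R) :
  (forall i j, `|M i j| <= B) -> (forall i, c 0 i ^+ 2 <= E) ->
  `|(c *m M *m c^T) 0 0| <= B * (r ^ 2)%:R * E.
Proof.
move=> hB hE.
have -> : (c *m M *m c^T) 0 0 = \sum_(m < r) \sum_(l < r) c 0 l * M l m * c 0 m.
  rewrite mxE; apply: eq_bigr => m _; rewrite !mxE mulr_suml.
  by apply: eq_bigr => l _.
apply: le_trans (ler_norm_sum _ _ _) _.
have -> : B * (r ^ 2)%:R * E = \sum_(l < r) \sum_(m < r) (B * E).
  by rewrite !sumr_const !card_ord -mulr_natr -mulr_natr expnS expn1 natrM; ring.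
apply: ler_sum => m _; apply: le_trans (ler_norm_sum _ _ _) _.
apply: ler_sum => l _.
have B0 : 0 <= B by apply: le_trans (hB l m); exact: normr_ge0.
rewrite !normrM.
have hlm : `|c 0 l| * `|c 0 m| <= E.
  have h1 := hE l; have h2 := hE m.
  have : 2 * (`|c 0 l| * `|c 0 m|) <= `|c 0 l| ^+ 2 + `|c 0 m| ^+ 2.
    have := sqr_ge0 (`|c 0 l| - `|c 0 m|); rewrite sqrrB; lra.
  rewrite !real_normK ?num_real //; lra.
have -> : `|c 0 l| * `|M l m| * `|c 0 m| = `|M l m| * (`|c 0 l| * `|c 0 m|) by ring.
by apply: ler_pM => //; rewrite mulr_ge0.
Qed.

Lemma inv_entry_bound n (G : 'M[R]_n) (B : R) : G \in unitmx -> 1 <= `|\det G| ->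
  (forall i j, `|G i j| <= B) ->
  forall i j, `|(invmx G)^T i j| <= #|{perm 'I_n.-1}|%:R * B ^+ n.-1.
Proof.
move=> Gu d1 hB i j.
rewrite mxE /invmx Gu mxE.
have dn0 : \det G != 0 by apply/eqP => h; move: d1; rewrite h normr0 ler10.
rewrite /adjugate mxE /cofactor !normrM normrX normrN1 expr1n mul1r normrV ?unitfE //.
have hc : `|\det (row' i (col' j G))| <= #|{perm 'I_n.-1}|%:R * B ^+ n.-1.
  by apply: det_bound => k l; rewrite !mxE.
apply: le_trans hc; rewrite ler_pdivrMl ?(lt_le_trans ltr01) //.
by rewrite ler_peMl ?normr_ge0.
Qed.

End Bounds.


Section Chain.
Variable R : rcfType.
Variable d : nat.
Variable Dl : R.
Hypothesis Dl1 : 1 <= Dl.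

Definition rv (a : 'rV[int]_d) : 'rV[R]_d := map_mx intr a.
Definition Aint (f : nat -> 'rV[int]_d) j : 'M[int]_(j, d) :=
  \matrix_(i < j, l < d) (f i.+1 - f i) 0 l.
Definition Amat f j : 'M[R]_(j, d) := map_mx intr (Aint f j).

Definition chain n (f : nat -> 'rV[int]_d) :=
  forall i, (i < n)%N -> sqn (rv (f i.+1)) = sqn (rv (f i)) /\
    sqn (rv (f i.+1) - rv (f i)) <= Dl ^+ 2.

Lemma row_Amat f j (i : 'I_j) : row i (Amat f j) = rv (f i.+1) - rv (f i).
Proof. by apply/rowP => l; rewrite /Amat /rv !mxE rmorphB. Qed.

Lemma chain_le n m f : (m <= n)%N -> chain n f -> chain m f.
Proof. by move=> hmn h i hi; apply: h; apply: leq_trans hi hmn. Qed.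

Lemma chain_sqn n f : chain n f -> forall m, (m <= n)%N -> sqn (rv (f m)) = sqn (rv (f 0)).
Proof.
move=> h; elim=> // m IH hm.
by rewrite (proj1 (h m hm)) IH // ltnW.
Qed.

Lemma Amat_sub f j n : (j <= n)%N -> (Amat f j <= Amat f n)%MS.
Proof.
move=> hjn; apply/row_subP => i.
apply: (eq_row_sub (widen_ord hjn i)).
by rewrite !row_Amat.
Qed.

Lemma diff_sub f n m : (m <= n)%N -> (rv (f m) - rv (f 0) <= Amat f n)%MS.
Proof.
elim: m => [|m IH] hm; first by rewrite subrr sub0mx.
have -> : rv (f m.+1) - rv (f 0) = (rv (f m.+1) - rv (f m)) + (rv (f m) - rv (f 0)).
  by rewrite addrA subrK.
apply: addmx_sub; last exact: IH (ltnW hm).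
by apply: (eq_row_sub (Ordinal hm)); rewrite row_Amat.
Qed.

End Chain.


Section Core.
Variable R : rcfType.
Variable d : nat.
Variable Dl : R.
Hypothesis Dl1 : 1 <= Dl.

Fixpoint K (k : nat) : R :=
  match k with
  | 0 => 0
  | 1 => 1
  | S (S _ as k') => 4 * (k'.+1 ^ 2)%:R * #|{perm 'I_k'}|%:R * (1 + 2 * K k')
  end.
Definition Sb k := K k * Dl ^+ (k * k.+1).

Lemma Dl0 : 0 <= Dl. Proof. exact: le_trans ler01 Dl1. Qed.

Lemma K_SS k : K k.+2 = 4 * (k.+2 ^ 2)%:R * #|{perm 'I_k.+1}|%:R * (1 + 2 * K k.+1).
Proof. by []. Qed.

Lemma K_ge0 k : 0 <= K k.
Proof.
elim: k => // [[|k]] IH //; rewrite K_SS.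
by rewrite !mulr_ge0 // ?ler0n // addr_ge0 // mulr_ge0.
Qed.

Lemma perm_ge1 k : 1 <= #|{perm 'I_k}|%:R :> R.
Proof. by rewrite ler1n; apply/card_gt0P; exists 1%g. Qed.



Lemma K_mono k : K k <= K k.+1.
Proof.
case: k => [|k]; first exact: ler01.
rewrite K_SS.
have h0 := K_ge0 k.+1.
have h1 := perm_ge1 k.+1.
have h2 : 1 <= ((k.+2 ^ 2)%:R : R) by rewrite ler1n expn_gt0.
set P := #|{perm 'I_k.+1}|%:R in h1 *; set N := _%:R in h2 *.
have hNP : 1 <= N * P by rewrite -[1]mulr1 ler_pM.
set x := K k.+1 in h0 *.
have hs : 0 <= N * P - 1 by rewrite subr_ge0.
have := mulr_ge0 hs (addr_ge0 ler01 (mulr_ge0 (ler0n _ 2) h0)).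
nra.
Qed.

Lemma S_mono k : Sb k <= Sb k.+1.
Proof.
rewrite /Sb; apply: ler_pM; [exact: K_ge0 | exact: exprn_ge0 Dl0 | exact: K_mono |].
by apply: ler_weXn2l => //; apply: leq_mul; exact: leqnSn.
Qed.

Lemma S_step k : (1 <= k)%N ->
  4 * (#|{perm 'I_k}|%:R * (Dl ^+ 2) ^+ k * ((k.+1 ^ 2)%:R) *
       (Dl ^+ 4 + 2 * Sb k * Dl ^+ 2)) <= Sb k.+1.
Proof.
case: k => // k _.
rewrite /Sb K_SS.
set X := Dl ^+ (k.+2 * k.+3).
have e1 : (Dl ^+ 2) ^+ k.+1 * Dl ^+ (k.+1 * k.+2) * Dl ^+ 2 = X.
  by rewrite -exprM -!exprD /X; congr (_ ^+ _); rewrite !mulSn !mulnS; lia.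
have e2 : (Dl ^+ 2) ^+ k.+1 * Dl ^+ 4 <= X.
  rewrite -exprM -exprD /X; apply: ler_weXn2l => //.
  rewrite !mulSn !mulnS; lia.
have h0 := K_ge0 k.+1.
have h1 : 0 <= #|{perm 'I_k.+1}|%:R :> R by exact: ler0n.
have h2 : 0 <= ((k.+2 ^ 2)%:R : R) by exact: ler0n.
set P := #|{perm 'I_k.+1}|%:R in h1 *; set N := ((k.+2 ^ 2)%:R : R) in h2 *.
set Y := (Dl ^+ 2) ^+ k.+1 in e1 e2 *.
set Z := Dl ^+ (k.+1 * k.+2) in e1 *.
set T := Dl ^+ 2 in e1 *.
set F := Dl ^+ 4 in e2 *.
set KK := K k.+1 in h0 *.
have -> : 4 * (P * Y * N * (F + 2 * (KK * Z) * T)) = 4 * N * P * (Y * F + 2 * KK * (Y * Z * T)).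
  by ring.
rewrite e1.
have hNP : 0 <= 4 * N * P by rewrite !mulr_ge0.
have -> : 4 * N * P * (1 + 2 * KK) * X = 4 * N * P * (X + 2 * KK * X) by ring.
by apply: ler_wpM2l => //; rewrite lerD2r.
Qed.

End Core.


Section Helpers.
Variable R : rcfType.
Variable d : nat.
Variable Dl : R.
Hypothesis Dl1 : 1 <= Dl.

Lemma gram_det_ge1 (f : nat -> 'rV[int]_d) j r (g : 'I_r -> 'I_j) :
  let W := rowsub g (Amat R f j) in W *m W^T \in unitmx -> 1 <= `|\det (W *m W^T)|.
Proof.
move=> W Gu.
have eW : W = map_mx intr (rowsub g (Aint f j)) by apply/matrixP => a b; rewrite !mxE.
have eG : W *m W^T = map_mx intr (rowsub g (Aint f j) *m (rowsub g (Aint f j))^T).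
  by rewrite map_mxM -map_trmx -eW.
move: Gu; rewrite eG det_map_mx unitmxE det_map_mx unitfE => nz.
rewrite -intr_norm ler1z -gtz0_ge1 normr_gt0.
by apply: contraNneq nz => ->; rewrite rmorph0.
Qed.

Lemma c_bound (b0 bi v : 'rV[R]_d) (E : R) :
  dot bi v = - sqn v / 2 -> sqn v <= Dl ^+ 2 -> sqn (bi - b0) <= E ->
  dot b0 v ^+ 2 <= Dl ^+ 4 + 2 * E * Dl ^+ 2.
Proof.
move=> h1 h2 h3.
have e : dot b0 v = dot bi v - dot (bi - b0) v by rewrite dotBl opprB addrC subrK.
have cs := CS (bi - b0) v.
have s1 := sqn_ge0 (bi - b0); have s2 := sqn_ge0 v.
have : dot (bi - b0) v ^+ 2 <= E * Dl ^+ 2.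
  apply: le_trans cs _; apply: ler_pM => //.
have : dot bi v ^+ 2 <= Dl ^+ 4 / 4.
  rewrite h1.
  have : sqn v ^+ 2 <= (Dl ^+ 2) ^+ 2 by rewrite ler_sqr ?nnegrE ?exprn_ge0 ?(le_trans ler01 Dl1).
  rewrite -exprM /=; nra.
rewrite e; set a := dot bi v; set b := dot (bi - b0) v => ha hb.
have := sqr_ge0 (a + b); nra.
Qed.

Lemma G_entry r (W : 'M[R]_(r, d)) :
  (forall l, sqn (row l W) <= Dl ^+ 2) -> forall a b, `|(W *m W^T) a b| <= Dl ^+ 2.
Proof.
move=> h a b.
have -> : (W *m W^T) a b = dot (row a W) (row b W).
  by rewrite mxE; apply: eq_bigr => i _; rewrite !mxE.
have cs := CS (row a W) (row b W).
have : dot (row a W) (row b W) ^+ 2 <= (Dl ^+ 2) ^+ 2.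
  apply: le_trans cs _; rewrite expr2; apply: ler_pM => //; exact: sqn_ge0.
rewrite -real_normK ?num_real // ler_sqr // nnegrE ?exprn_ge0 ?(le_trans ler01 Dl1) //.
Qed.

Lemma r1_case r (W : 'M[R]_(r, d)) (b0 : 'rV[R]_d) : r = 1%N -> row_free W ->
  (forall l, dot b0 (row l W) = - sqn (row l W) / 2) ->
  (forall l, sqn (row l W) <= Dl ^+ 2) ->
  ((b0 *m W^T) *m (invmx (W *m W^T))^T *m (b0 *m W^T)^T) 0 0 <= Dl ^+ 2 / 4.
Proof.
move=> hr; subst r => fW hd hs.
have W0 : W != 0 by apply: contraTneq fW => ->; rewrite /row_free mxrank0.
rewrite r1_val // -(row_id 0 W) hd.
have sW : 0 < sqn (row 0 W).
  rewrite lt_def sqn_ge0 andbT; apply/eqP => /sqn_eq0; rewrite row_id => h.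
  by move: W0; rewrite h eqxx.
have := hs 0; set s := sqn (row 0 W) in sW *.
move=> hs0.
have -> : (- s / 2) ^+ 2 / s = s / 4 by field; rewrite gt_eqF.
lra.
Qed.

End Helpers.


Section CoreL.
Variable R : rcfType.
Variable d : nat.
Variable Dl : R.
Hypothesis Dl1 : 1 <= Dl.

Lemma core k : forall n (f : nat -> 'rV[int]_d), chain Dl n f ->
  (\rank (Amat R f n) <= k)%N ->
  forall m, (m <= n)%N -> sqn (rv R (f m) - rv R (f 0)) <= Sb Dl k.
Proof.
elim: k => [|k IH] n f hc hr m hm.
  move: hr; rewrite leqn0 mxrank_eq0 => /eqP A0.
  have := diff_sub R f hm; rewrite A0 => /submx0null ->.
  by rewrite /sqn dot0l /Sb /= mul0r.
case: (leqP (\rank (Amat R f n)) k) => hrk.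
  exact: le_trans (IH n f hc hrk m hm) (S_mono Dl1 k).
have hP : exists j, (k < \rank (Amat R f j))%N by exists n.
case: (ex_minnP hP) => j hj hmin.
have hjn : (j <= n)%N := hmin n hrk.
case: j hj hmin hjn => [|j'] hj hmin hjn.
  by move: hj; rewrite ltnNge (leq_trans (rank_leq_row _)).
have hr' : (\rank (Amat R f j') <= k)%N.
  by rewrite leqNgt; apply/negP => /hmin; rewrite ltnn.
have hc' : chain Dl j' f := chain_le (ltnW hjn) hc.
have IH' := IH j' f hc' hr'.
set A := Amat R f j'.+1.
have sAA : (A <= Amat R f n)%MS := Amat_sub R f hjn.
have rA : \rank A = k.+1.
  by apply/eqP; rewrite eqn_leq; apply/andP; split; [exact: leq_trans (mxrankS sAA) hr | exact: hj].
have sAn : (Amat R f n <= A)%MS.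
  have [_ <-] := mxrank_leqif_sup sAA.
  by rewrite rA eqn_leq; apply/andP; split; [exact: hrk | exact: hr].
set g := maxrankfun A; set W := rowsub g A.
have fW : row_free W := maxrowsub_free A.
have Gu := gram_unit fW.
have : (rv R (f m) - rv R (f 0) <= W)%MS.
  by rewrite (eq_maxrowsub A); exact: submx_trans (diff_sub R f hm) sAn.
case/submxP => y hy.
have hsq : sqn (rv R (f 0) + (rv R (f m) - rv R (f 0))) = sqn (rv R (f 0)).
  by rewrite addrC subrK (chain_sqn hc hm).
have hst := step_bound fW hy hsq.
have hrow : forall l, row l W = rv R (f (g l).+1) - rv R (f (g l)).
  by move=> l; rewrite /W row_rowsub row_Amat.
have hgl : forall l, (g l <= j')%N by move=> l; rewrite -ltnS ltn_ord.
have hgn : forall l, (g l < n)%N by move=> l; apply: leq_trans (ltn_ord _) hjn.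
have hs : forall l, sqn (row l W) <= Dl ^+ 2.
  by move=> l; rewrite hrow; exact: (proj2 (hc _ (hgn l))).
have hdi : forall l, dot (rv R (f (g l))) (row l W) = - sqn (row l W) / 2.
  move=> l; have := proj1 (hc _ (hgn l)).
  have -> : rv R (f (g l).+1) = rv R (f (g l)) + row l W by rewrite hrow addrC subrK.
  rewrite sqnD => h.
  set a := dot _ _ in h *; set b := sqn _ in h *; lra.
have hIH : forall l, sqn (rv R (f (g l)) - rv R (f 0)) <= Sb Dl k.
  by move=> l; apply: IH'.
have hcl : forall l, (rv R (f 0) *m W^T) 0 l = dot (rv R (f 0)) (row l W).
  by move=> l; rewrite mxE; apply: eq_bigr => i _; rewrite !mxE.
have [k0|kpos] := eqVneq k 0%N.
  subst k.
  have Q1 := r1_case (Dl := Dl) (b0 := rv R (f 0)) rA fW.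
  have : ((rv R (f 0) *m W^T) *m (invmx (W *m W^T))^T *m (rv R (f 0) *m W^T)^T) 0 0
      <= Dl ^+ 2 / 4.
    apply: Q1 => // l.
    have h0 := hIH l; rewrite /Sb /= mul0r in h0.
    have e0 : rv R (f (g l)) = rv R (f 0).
      apply/eqP; rewrite -subr_eq0; apply/eqP; apply: sqn_eq0.
      by apply/le_anti; rewrite h0 sqn_ge0.
    by rewrite -e0 hdi.
  move=> hQ; apply: le_trans hst _.
  rewrite /Sb /= mul1r mul1n; move: hQ; set Q := (_ *m _) 0 0; lra.
have hE : forall l, (rv R (f 0) *m W^T) 0 l ^+ 2 <= Dl ^+ 4 + 2 * Sb Dl k * Dl ^+ 2.
  move=> l; rewrite hcl; apply: (c_bound Dl1 (hdi l) (hs l) (hIH l)).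
have hM := inv_entry_bound Gu (gram_det_ge1 Gu) (G_entry Dl1 hs).
have hQ := quad_bound hM hE.
have H : sqn (rv R (f m) - rv R (f 0)) <=
  4 * (#|{perm 'I_(\rank A).-1}|%:R * (Dl ^+ 2) ^+ (\rank A).-1 * ((\rank A) ^ 2)%:R *
       (Dl ^+ 4 + 2 * Sb Dl k * Dl ^+ 2)).
  apply: le_trans hst _; rewrite ler_pM2l ?ltr0n //.
  exact: le_trans (ler_norm _) hQ.
move: H; rewrite rA /= => H.
apply: le_trans H _; apply: S_step => //.
by rewrite lt0n.
Qed.

End CoreL.


Section Final.
Variable R : rcfType.
Variable d : nat.

Lemma enormE (a : 'rV[int]_d) : enorm R a = Num.sqrt (sqn (rv R a)).
Proof. by rewrite /enorm /sqn /dot; congr Num.sqrt; apply: eq_bigr => i _; rewrite !mxE expr2. Qed.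

Lemma rvB (a b : 'rV[int]_d) : rv R (a - b) = rv R a - rv R b.
Proof. exact: map_mxB. Qed.
Lemma rvD (a b : 'rV[int]_d) : rv R (a + b) = rv R a + rv R b.
Proof. exact: map_mxD. Qed.
Lemma rvN (a : 'rV[int]_d) : rv R (- a) = - rv R a.
Proof. exact: map_mxN. Qed.

Lemma enorm_eq (a b : 'rV[int]_d) : enorm R a = enorm R b -> sqn (rv R a) = sqn (rv R b).
Proof.
rewrite !enormE => h.
by rewrite -(sqr_sqrtr (sqn_ge0 (rv R a))) h sqr_sqrtr // sqn_ge0.
Qed.

Lemma enorm_le (a : 'rV[int]_d) (D : R) : enorm R a <= D -> sqn (rv R a) <= D ^+ 2.
Proof.
rewrite enormE => h.
rewrite -(sqr_sqrtr (sqn_ge0 (rv R a))) ler_sqr // nnegrE ?sqrtr_ge0 //.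
exact: le_trans (sqrtr_ge0 _) h.
Qed.

Lemma simD_sym Delta (a b : 'rV[int]_d) : simD R Delta a b -> simD R Delta b a.
Proof.
rewrite /simD /bracket => -[h1 h2]; split; first by rewrite h1.
have -> : enorm R (b - a) = enorm R (a - b) by rewrite -opprB !enormE rvN sqnN.
by rewrite [b + a]addrC.
Qed.

Lemma extract Delta (a b : 'rV[int]_d) : approxD R Delta a b ->
  exists n (f : nat -> 'rV[int]_d), f 0%N = a /\ (f n = b \/ f n = - b) /\
    chain (Delta%:R : R) n f.
Proof.
move=> H0; have H := clos_rst_rstn1 _ _ _ _ H0; clear H0; elim: H => [|y z hyz _ [n [f [f0 [fn hc]]]]].
  by exists 0%N, (fun _ => a); split => //; split; [left | move=> i].
have [e1 e2] : simD R Delta y z by case: hyz => // /simD_sym.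
have [s [hs1 [hs2 hs3]]] : exists s, (s = z \/ s = - z) /\
   enorm R s = enorm R (f n) /\ enorm R (s - f n) <= Delta%:R.
  move: e2; rewrite /bracket ge_min => /orP.
  have nN : forall x : 'rV[int]_d, enorm R (- x) = enorm R x.
    by move=> x; rewrite !enormE rvN sqnN.
  have nS : forall x w : 'rV[int]_d, enorm R (x - w) = enorm R (w - x).
    by move=> x w; rewrite -opprB nN.
  case: fn => -> [] h.
  - exists z; split; [by left|split; [by rewrite e1| by rewrite nS]].
  - exists (- z); split; [by right|split; [by rewrite nN e1|]].
    by rewrite -opprD nN [z + y]addrC.
  - exists (- z); split; [by right|split; [by rewrite !nN e1|]].
    by rewrite opprK addrC.
  - exists z; split; [by left|split; [by rewrite nN e1|]].
    by rewrite opprK addrC.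
exists n.+1, (fun i => if (i <= n)%N then f i else s); split => //=.
split; first by rewrite ltnn; case: hs1 => ->; [left|right].
move=> i hi; case: (ltngtP i n) => hin.
- exact: hc.
- by move: hi; rewrite ltnS => hi; have := leq_trans hin hi; rewrite ltnn.
- subst i; split; first exact: enorm_eq hs2.
  by rewrite -rvB; apply: enorm_le hs3.
Qed.

End Final.


Lemma nat_fact d : (1 <= d)%N -> (d * d.+1 <= (d.+1)`! %/ 2 * 2)%N.
Proof.
case: d => // d _.
rewrite divnK; last by apply: dvdn_fact.
rewrite factS mulnC leq_mul2l /= factS leq_pmulr ?fact_gt0 //.
Qed.

Unset Implicit Arguments.

Theorem proposition3p1 (R : rcfType) (d : nat) (hd : (1 <= d)%N) :
  exists C : R, forall Delta : nat, (1 <= Delta)%N ->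
    forall a b : 'rV[int]_d, approxD R Delta a b ->
      bracket R a b <= C * (Delta%:R) ^+ ((d.+1)`! %/ 2).
Proof.
exists (Num.sqrt (K R d)) => Delta hD a b hab.
have Dl1 : 1 <= (Delta%:R : R) by rewrite ler1n.
have [n [f [f0 [fn hc]]]] := extract hab.
have hb := core Dl1 (k := d) hc (rank_leq_col _) (leqnn n).
rewrite f0 in hb.
set E := ((d.+1)`! %/ 2)%N.
set Y := Num.sqrt (K R d) * (Delta%:R : R) ^+ E.
have Y0 : 0 <= Y by rewrite mulr_ge0 ?sqrtr_ge0 ?exprn_ge0 ?ler0n.
have key : sqn (rv R (f n) - rv R a) <= Y ^+ 2.
  rewrite /Y exprMn sqr_sqrtr ?K_ge0 // -exprM; apply: le_trans hb _.
  rewrite /Sb ler_wpM2l ?K_ge0 //; apply: ler_weXn2l => //.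
  exact: nat_fact.
have fin : forall x : 'rV[int]_d, sqn (rv R x) <= Y ^+ 2 -> enorm R x <= Y.
  move=> x hx; rewrite enormE -(ger0_norm Y0) -sqrtr_sqr ler_sqrt //.
  exact: exprn_ge0.
rewrite /bracket ge_min; apply/orP; case: fn => hfn.
  left; apply: fin; rewrite rvB -opprB sqnN -hfn //.
right; apply: fin; rewrite rvD -sqnN opprD.
by move: key; rewrite hfn rvN addrC.
Qed.
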